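(* Let $\mathfrak A$ be a commutative ring and let $(a_i),(a^*_i),(b_i),(b^*_i)$, $i\in\mathbb Z$, be sequences in $\mathfrak A$ with $a_0=a^*_0=b_0=b^*_0=1$ and $a_i=a^*_i=b_i=b^*_i=0$ for $i<0$, such that $\big(\sum_{i\ge0}a_it^i\big)\big(\sum_{i\ge0}b_it^i\big)=1$ and $\big(\sum_{i\ge0}a^*_it^i\big)\big(\sum_{i\ge0}b^*_it^i\big)=1$ as formal power series. Let $\nu,\mu$ be partitions, $q=\ell(\nu)$, $p=\ell(\mu)$, $s=\ell(\nu')$, $r=\ell(\mu')$ ($'$ denoting conjugation). Let $A$ be the $(p+q)\times(p+q)$ matrix with $A_{ij}=a^*_{\nu_{q+1-i}+i-j}$ for $1\le i\le q$ and $A_{q+i,j}=a_{\mu_i-q-i+j}$ for $1\le i\le p$, and $B$ the $(r+s)\times(r+s)$ matrix with $B_{ij}=b^*_{\nu'_{s+1-i}+i-j}$ for $1\le i\le s$ and $B_{s+i,j}=b_{\mu'_i-s-i+j}$ for $1\le i\le r$. Then $\det A=(-1)^{|\nu|+|\mu|}\det B$.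
   Context: $\ell(\lambda)$ is the number of nonzero parts of a partition $\lambda$ and $|\lambda|$ its size. Explicitly, the rows of $A$ are $(a^*_{\nu_q},a^*_{\nu_q-1},\dots,a^*_{\nu_q-q-p+1}),\dots,(a^*_{\nu_1+q-1},\dots,a^*_{\nu_1-p}),(a_{\mu_1-q},\dots,a_{\mu_1+p-1}),\dots,(a_{\mu_p-q-p+1},\dots,a_{\mu_p})$, and $B$ is analogous with $b^*,b,\nu',\mu',s,r$. *)

(* Defs.v *)
From HB Require Import structures.
From mathcomp Require Import all_boot all_order all_algebra.
Set Implicit Arguments. Unset Strict Implicit. Unset Printing Implicit Defensive.
Import Order.TTheory GRing.Theory Num.Theory.
Local Open Scope ring_scope.

Definition is_partition (la : seq nat) : bool :=
  sorted geq la && all (fun x => 0 < x)%N la.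

Definition conj_part (la : seq nat) : seq nat :=
  mkseq (fun j => count (fun x => j < x)%N la) (foldr maxn 0%N la).

(* 1-based part la_i (i >= 1) is  nth 0 la (i-1). *)

Definition series_inverse (R : comPzRingType) (a b : int -> R) : Prop :=
  forall n : nat, \sum_(k < n.+1) a (k%:Z) * b ((n - k)%:Z) = (n == 0%N)%:R.

Definition normalized_seq (R : comPzRingType) (a : int -> R) : Prop :=
  a 0 = 1 /\ forall i : int, i < 0 -> a i = 0.

(* The (q+p) x (q+p) matrix, q = size nu, p = size mu, 0-based indices:
   row i < q     : A_{i,j} = astar_{ nu_{q-i} + i - j }      (1-based nu)
   row q + i'    : A_{q+i',j} = a_{ mu_{i'+1} - q - i' + j }  (1-based mu) *)
Definition jt_matrix (R : comPzRingType) (astar a : int -> R) (nu mu : seq nat)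
  : 'M[R]_(size nu + size mu) :=
  \matrix_(i, j)
    if (i < size nu)%N
    then astar ((nth 0%N nu (size nu - 1 - i))%:Z + i%:Z - j%:Z)
    else a ((nth 0%N mu (i - size nu))%:Z - (size nu)%:Z - (i - size nu)%:Z + j%:Z).

(* Main.v *)
Require Import Defs.
From HB Require Import structures.
From mathcomp Require Import all_boot all_order all_algebra all_fingroup.
From mathcomp Require Import zify ring lra.
Set Implicit Arguments. Unset Strict Implicit. Unset Printing Implicit Defensive.
Import Order.TTheory GRing.Theory Num.Theory.

Definition cnt (la : seq nat) (j : nat) := count (fun x => j < x)%N la.
Definition sh (la : seq nat) (l L : nat) : nat :=
  if (L < l)%N then nth 0%N la (l - 1 - L) + L else L - cnt la (L - l).

Lemma cnt_head la j : cnt la j = ((j < head 0 la) + cnt (behead la) j)%N.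
Proof. by case: la. Qed.

Lemma geq_trans : transitive geq.
Proof. by move=> a b c h1 h2; apply: leq_trans h2 h1. Qed.

Lemma sorted_le_head la y : sorted geq la -> y \in behead la -> (y <= head 0 la)%N.
Proof.
case: la => //= x s Hs Hy.
by have /allP := order_path_min geq_trans Hs; apply.
Qed.

Lemma nth_behead_le la i : sorted geq la -> (nth 0 (behead la) i <= head 0 la)%N.
Proof.
move=> Hs; case: (ltnP i (size (behead la))) => Hi.
  by apply: sorted_le_head => //; apply: mem_nth.
by rewrite nth_default.
Qed.

Lemma cnt_behead0 la j : sorted geq la -> (head 0 la <= j)%N -> cnt (behead la) j = 0%N.
Proof.
move=> Hs Hj; apply/eqP; rewrite -leqn0 leqNgt -has_count; apply/hasP => -[y Hy].
by rewrite ltnNge (leq_trans (sorted_le_head Hs Hy) Hj).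
Qed.

Lemma sorted_behead la : sorted geq la -> sorted geq (behead la).
Proof. by case: la => //= x s; apply: path_sorted. Qed.

Lemma sumn_head la : sumn la = (head 0 la + sumn (behead la))%N.
Proof. by case: la. Qed.

Lemma sh_perm (l w : nat) (la : seq nat) : sorted geq la -> (size la <= l)%N ->
  all (fun x => x <= w)%N la ->
  exists s : 'S_(l + w), (forall i, val (s i) = sh la l i) /\ odd_perm s = odd (sumn la).
Proof.
elim: l la => [|l IH] la Hs Hsz Hw.
  have -> : la = [::] by move: Hsz; case: (la).
  exists 1%g; split; last by rewrite odd_perm1.
  by move=> i; rewrite perm1 /sh /= subn0.
have Hs' := sorted_behead Hs.
have Hsz' : (size (behead la) <= l)%N by rewrite size_behead; lia.
have Hw' : all (fun x => x <= w)%N (behead la).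
  by move: Hw; case: (la) => //= x s /andP[].
have Hx : (head 0 la <= w)%N by move: Hw; case: (la) => //= x s /andP[].
have [s' [Hv Ho]] := IH _ Hs' Hsz' Hw'.
have Hj : (head 0 la + l < (l + w).+1)%N by lia.
pose s : 'S_((l + w).+1) := lift_perm (@Ordinal (l + w).+1 l (leq_addr w l : (l < (l + w).+1)%N)) (Ordinal Hj) s'.
exists s; split.
  move=> i; case: (unliftP (@Ordinal (l + w).+1 l (leq_addr w l : (l < (l + w).+1)%N)) i) => [k ->|->].
    rewrite /s lift_perm_lift /= /bump Hv /sh /=.
    have Hb := nth_behead_le (l - 1 - k) Hs.
    case: (ltnP k l) => Hk.
      rewrite /= add0n ltnS (ltnW Hk).
      have -> : (l.+1 - 1 - k = (l - 1 - k).+1)%N by lia.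
      rewrite -nth_behead.
      have -> : (head 0 la + l <= nth 0 (behead la) (l - 1 - k) + k = false)%N by apply/negbTE; lia.
      by rewrite add0n.
    rewrite /= add1n ltnS ltnNge Hk /= [cnt la _]cnt_head.
    have -> : (k.+1 - l.+1 = k - l)%N by lia.
    case: (ltnP (k - l) (head 0 la)) => Hkl.
      have -> : (head 0 la + l <= k - cnt (behead la) (k - l) = false)%N by apply/negbTE; lia.
      by rewrite add0n add1n subSS.
    rewrite (cnt_behead0 Hs Hkl) subn0 /=.
    have -> : (head 0 la + l <= k)%N by lia.
    by rewrite add1n subn0.
  rewrite /s lift_perm_id /= /sh ltnSn.
  by have -> : (l.+1 - 1 - l = 0)%N by lia; rewrite nth0 addnC.
rewrite /s odd_lift_perm /= Ho [sumn la]sumn_head oddD addnC oddD.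
by case: (odd l); case: (odd (head 0 la)); case: (odd (sumn (behead la))).
Qed.




Definition psum_fun a b (s : 'S_a) (t : 'S_b) (i : 'I_(a + b)) : 'I_(a + b) :=
  match split i with inl x => lshift b (s x) | inr y => rshift a (t y) end.

Lemma psum_inj a b (s : 'S_a) (t : 'S_b) : injective (psum_fun s t).
Proof.
move=> i j; rewrite /psum_fun.
case: splitP => x Hx; case: splitP => y Hy; move/(congr1 val) => /= H.
- by apply: ord_inj; rewrite Hx Hy; congr val; apply: (perm_inj (s := s)); apply/val_inj.
- by have := ltn_ord (s x); lia.
- by have := ltn_ord (s y); lia.
- apply: ord_inj; rewrite Hx Hy; congr (_ + _)%N; congr nat_of_ord; apply: (perm_inj (s := t)); apply: ord_inj; lia.
Qed.

Definition psum a b (s : 'S_a) (t : 'S_b) : 'S_(a + b) := perm (@psum_inj a b s t).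

Lemma psum_lshift a b (s : 'S_a) (t : 'S_b) x : psum s t (lshift b x) = lshift b (s x).
Proof. by rewrite permE /psum_fun (unsplitK (inl _ x)). Qed.
Lemma psum_rshift a b (s : 'S_a) (t : 'S_b) x : psum s t (rshift a x) = rshift a (t x).
Proof. by rewrite permE /psum_fun (unsplitK (inr _ x)). Qed.


Local Open Scope ring_scope.
Lemma norm_neg (R : comPzRingType) (a : int -> R) : normalized_seq a -> forall i : int, i < 0 -> a i = 0.
Proof. by case. Qed.

Lemma conv (R : comPzRingType) (a b : int -> R) : normalized_seq a -> normalized_seq b ->
  series_inverse a b -> forall N x y : nat, (x < N)%N -> (y < N)%N ->
  \sum_(L < N) a (x%:Z - L%:Z) * b (L%:Z - y%:Z) = (x == y)%:R.
Proof.
move=> Na Nb Sab N x y Hx Hy.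
rewrite -(big_mkord xpredT (fun L : nat => a (x%:Z - L%:Z) * b (L%:Z - y%:Z))).
case: (ltnP x y) => Hxy.
  rewrite (_ : (x == y) = false); last by apply/negbTE; rewrite neq_ltn Hxy.
  rewrite big1 // => L _.
  case: (ltnP x L) => HL; first by rewrite (norm_neg Na) ?mul0r //; lia.
  by rewrite (norm_neg Nb) ?mulr0 //; lia.
rewrite (big_cat_nat (n := y)) //=; last by lia.
rewrite (big_cat_nat (m := y) (n := x.+1)) //=; try lia.
have Z : forall L, (L < y)%N || (x < L)%N -> a (x%:Z - L%:Z) * b (L%:Z - y%:Z) = 0.
  move=> L /orP[] HL; first by rewrite (norm_neg Nb) ?mulr0 //; lia.
  by rewrite (norm_neg Na) ?mul0r //; lia.
rewrite [X in X + (_ + _)]big1_seq; last first.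
  by move=> L; rewrite mem_index_iota => HL; apply: Z; apply/orP; lia.
rewrite [X in _ + (_ + X)]big1_seq; last first.
  by move=> L; rewrite mem_index_iota => HL; apply: Z; apply/orP; lia.
rewrite add0r addr0 (big_addn 0 x.+1 y) big_mkord.
rewrite (_ : (x.+1 - y = (x - y).+1)%N); last by lia.
have -> : (x == y) = (x - y == 0)%N by apply/eqP/eqP; lia.
have := Sab (x - y)%N.
rewrite (reindex_inj rev_ord_inj) /= => <-.
apply: eq_bigr => k _; have := ltn_ord k; move=> Hk; congr (a _ * b _); lia.
Qed.

Local Close Scope ring_scope.
Lemma sum_pick (R : comPzRingType) N (F : nat -> R) e : (e < N)%N ->
  (\sum_(k < N) F k * (k == e :> nat)%:R = F e)%R.
Proof.
move=> He; rewrite (bigD1 (Ordinal He)) //= eqxx GRing.mulr1 big1 ?GRing.addr0 // => k Hk.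
rewrite (_ : (val k == e) = false) ?GRing.mulr0 //; apply/negbTE; apply: contra Hk => /eqP H.
by apply/eqP; apply: ord_inj.
Qed.

Lemma sum_pick' (R : comPzRingType) N (F : nat -> R) e : (e < N)%N ->
  (\sum_(k < N) (k == e :> nat)%:R * F k = F e)%R.
Proof.
move=> He; rewrite -[RHS](sum_pick F He); apply: eq_bigr => k _; exact: GRing.mulrC.
Qed.



Lemma le_foldr_max la x : x \in la -> (x <= foldr maxn 0 la)%N.
Proof.
elim: la => //= y la IH; rewrite in_cons => /orP[/eqP->|/IH H]; first by apply: leq_maxl.
by apply: leq_trans H (leq_maxr _ _).
Qed.

Lemma all_le_max la : all (fun x => x <= foldr maxn 0 la)%N la.
Proof. by apply/allP => x; apply: le_foldr_max. Qed.

Lemma size_conj la : size (conj_part la) = foldr maxn 0 la.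
Proof. by rewrite size_mkseq. Qed.

Lemma nth_conj la j : nth 0 (conj_part la) j = cnt la j.
Proof.
case: (ltnP j (foldr maxn 0 la)) => H; first by rewrite nth_mkseq.
rewrite nth_default ?size_conj //; apply/esym/eqP; rewrite -leqn0 leqNgt -has_count.
apply/hasP => -[x Hx]; rewrite ltnNge (leq_trans (le_foldr_max Hx) H) //.
Qed.

Lemma cnt_le la j : (cnt la j <= size la)%N.
Proof. exact: count_size. Qed.



Local Open Scope ring_scope.
Lemma sign_psum (R : comPzRingType) a b (s : 'S_a) (t : 'S_b) :
  (((-1) ^+ psum s t : R) = (-1) ^+ s * (-1) ^+ t)%R.
Proof.
rewrite -!det_perm.
have -> : perm_mx (psum s t) = block_mx (perm_mx s) 0 0 (perm_mx t) :> 'M[R]_(a + b).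
  apply/matrixP => i j.
  rewrite -[i]splitK -[j]splitK; case: (split i) => x; case: (split j) => y /=.
  - by rewrite block_mxEul !mxE psum_lshift (inj_eq (@lshift_inj _ _)).
  - rewrite block_mxEur !mxE psum_lshift.
    have -> : (lshift b (s x) == rshift a y) = false.
      by apply/negbTE/eqP => /(congr1 val) /=; have := ltn_ord (s x); lia.
    by [].
  - rewrite block_mxEdl !mxE psum_rshift.
    have -> : (rshift a (t x) == lshift b y) = false.
      by apply/negbTE/eqP => /(congr1 val) /=; have := ltn_ord y; lia.
    by [].
  - by rewrite block_mxEdr !mxE psum_rshift (inj_eq (@rshift_inj _ _)).
by rewrite det_ublock.
Qed.

Lemma odd_cast_perm m n (e : m = n) (s : 'S_m) : odd_perm (cast_perm e s) = odd_perm s.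
Proof. by case: n / e; rewrite cast_perm_id. Qed.

Local Close Scope ring_scope.

Ltac dif := repeat match goal with |- context[if ?c then _ else _] =>
  lazymatch c with context[if _ then _ else _] => fail | _ =>
  let H := fresh "H" in case: (boolP c) => H end end.

Section Main.
Variable R : comPzRingType.
Variables (a astar b bstar : int -> R) (nu mu : seq nat).
Variables (q p s r : nat).
Hypothesis Hq : size nu = q.
Hypothesis Hp : size mu = p.
Hypothesis Hs : size (conj_part nu) = s.
Hypothesis Hr : size (conj_part mu) = r.

Definition nn := (q + p)%N.
Definition mm := (s + r)%N.
Definition NN := (nn + mm)%N.

Definition rhon (j : nat) : nat :=
  if (j < q)%N then j else if (j < nn)%N then (q + s + (p + q - 1 - j))%N
  else if (j < nn + s)%N then (q + s - 1 - (j - nn))%N else (q + s + (p + (j - nn) - s))%N.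

Lemma rhon_lt j : (j < NN)%N -> (rhon j < NN)%N.
Proof. rewrite /rhon /NN /nn /mm; repeat case: ifP; lia. Qed.

Lemma rhon_inj j k : (j < NN)%N -> (k < NN)%N -> rhon j = rhon k -> j = k.
Proof. rewrite /rhon /NN /nn /mm; repeat case: ifP; lia. Qed.

Definition rhof (j : 'I_NN) : 'I_NN := Ordinal (rhon_lt (ltn_ord j)).
Lemma rhof_inj : injective rhof.
Proof. by move=> j k /(congr1 val) /= H; apply: ord_inj; apply: rhon_inj. Qed.
Definition rho : 'S_NN := perm rhof_inj.
Lemma rhoE j : val (rho j) = rhon j.
Proof. by rewrite permE. Qed.

Definition tauf (L : nat) : nat :=
  if (L < q + s)%N then sh nu q L else (q + s + sh mu p (L - (q + s)))%N.

Variables (sv : 'S_(q + s)) (sm : 'S_(p + r)).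
Hypothesis Hsv : forall i, val (sv i) = sh nu q i.
Hypothesis Hsm : forall i, val (sm i) = sh mu p i.

Lemma eqN : ((q + s) + (p + r) = NN)%N.
Proof. rewrite /NN /nn /mm; lia. Qed.

Definition tau : 'S_NN := cast_perm eqN (psum sv sm).

Lemma tauE L : val (tau L) = tauf (val L).
Proof.
rewrite /tau cast_permE /= permE /psum_fun /tauf.
case: splitP => x /= Hx; rewrite Hx.
  by rewrite Hsv ltn_ord.
rewrite Hsm /=.
have -> : (q + s + x < q + s = false)%N by apply/negbTE; lia.
by rewrite addKn.
Qed.

Definition lab (i : nat) := tauf (rhon i).

Local Open Scope ring_scope.
Hypotheses (Na : normalized_seq a) (Nas : normalized_seq astar) (Nb : normalized_seq b)
  (Nbs : normalized_seq bstar) (Sab : series_inverse a b) (Sas : series_inverse astar bstar).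

Definition Dcf (x y : nat) : R :=
  if (x < q + s)%N then (if (y < q + s)%N then astar (x%:Z - y%:Z) else 0)
  else (if (y < q + s)%N then 0 else a (x%:Z - y%:Z)).
Definition Dif (x y : nat) : R :=
  if (x < q + s)%N then (if (y < q + s)%N then bstar (x%:Z - y%:Z) else 0)
  else (if (y < q + s)%N then 0 else b (x%:Z - y%:Z)).
Definition Dcan : 'M[R]_NN := \matrix_(i, j) Dcf i j.
Definition Dinv : 'M[R]_NN := \matrix_(i, j) Dif i j.

Lemma DcanDinv : Dcan *m Dinv = 1%:M.
Proof.
apply/matrixP => i j; rewrite !mxE.
under eq_bigr do rewrite !mxE.
have Hi := ltn_ord i; have Hj := ltn_ord j.
rewrite /Dcf /Dif; case: (ltnP i (q + s)) => Hiq; case: (ltnP j (q + s)) => Hjq.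
- rewrite -(conv Nas Nbs Sas Hi Hj); apply: eq_bigr => L _.
  case: ifP => HL //; rewrite (norm_neg Nas) ?mul0r //; lia.
- rewrite (_ : (i == j) = false); last by apply/negbTE/eqP => /(congr1 val) /=; lia.
  by rewrite big1 // => L _; case: ifP => _; rewrite ?mulr0 ?mul0r.
- rewrite (_ : (i == j) = false); last by apply/negbTE/eqP => /(congr1 val) /=; lia.
  by rewrite big1 // => L _; case: ifP => _; rewrite ?mulr0 ?mul0r.
- rewrite -(conv Na Nb Sab Hi Hj); apply: eq_bigr => L _.
  case: ifP => HL //; rewrite (norm_neg Nb) ?mulr0 //; lia.
Qed.

Definition hx (j : nat) : bool :=
  ((j < q)%N && (q - 1 - j < r)%N) || [&& (q <= j)%N, (j < nn)%N & (j < q + s)%N].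
Definition exn (j : nat) : nat :=
  if (j < q)%N then (nn + s + (q - 1 - j))%N else (nn + (q + s - 1 - j))%N.
Definition hy (k : nat) : bool :=
  [&& (nn <= k)%N, (k < nn + s)%N & (q + s - 1 - (k - nn) < nn)%N] ||
  ((nn + s <= k)%N && (k - nn - s < q)%N).
Definition exinv (k : nat) : nat :=
  if (k < nn + s)%N then (q + s - 1 - (k - nn))%N else (q - 1 - (k - nn - s))%N.

Lemma hx_exn j : hx j -> (nn <= exn j < NN)%N.
Proof. rewrite /hx /exn /NN /nn /mm; case: ifP; lia. Qed.

Lemma hxy k l : (k < NN)%N -> (l < NN)%N ->
  (hx l && (k == exn l)) = (hy k && (l == exinv k)).
Proof.
move=> Hk Hl; rewrite /hx /exn /hy /exinv /NN /nn /mm in Hk Hl *.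
case: ifP => h1; case: ifP => h2; apply/idP/idP; lia.
Qed.

Definition Nm : 'M[R]_NN := \matrix_(k, j) (hx j && (k == exn j :> nat))%:R.

Lemma Nm2 : Nm *m Nm = 0.
Proof.
apply/matrixP => k j; rewrite !mxE big1 // => l _; rewrite !mxE.
case H1: (hx j && (l == exn j :> nat)); last by rewrite mulr0.
case H2: (hx l && (k == exn l :> nat)); last by rewrite mul0r.
exfalso; move: H1 H2; rewrite /hx /exn /nn; case: ifP; case: ifP; lia.
Qed.

Definition X : 'M[R]_NN :=
  perm_mx rho *m perm_mx tau *m Dcan *m perm_mx rho^-1 *m (1%:M + Nm).
Definition Y : 'M[R]_NN :=
  (1%:M - Nm) *m perm_mx rho *m Dinv *m perm_mx tau^-1 *m perm_mx rho^-1.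

Lemma XY : X *m Y = 1%:M.
Proof.
have E1 : forall A : 'M[R]_NN, A *m perm_mx rho^-1 *m perm_mx rho = A.
  by move=> A; rewrite -mulmxA -perm_mxM mulVg perm_mx1 mulmx1.
have E2 : forall A : 'M[R]_NN, A *m (1%:M + Nm) *m (1%:M - Nm) = A.
  move=> A; rewrite -mulmxA.
  by rewrite mulmxDl !mulmxBr !mul1mx !mulmx1 Nm2 subr0 subrK mulmx1.
have E3 : forall A : 'M[R]_NN, A *m Dcan *m Dinv = A.
  by move=> A; rewrite -mulmxA DcanDinv mulmx1.
have E4 : forall A : 'M[R]_NN, A *m perm_mx tau *m perm_mx tau^-1 = A.
  by move=> A; rewrite -mulmxA -perm_mxM mulgV perm_mx1 mulmx1.
rewrite /X /Y !mulmxA E2 E1 E3 E4.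
by rewrite -perm_mxM mulgV perm_mx1.
Qed.

Lemma det_Dcan : \det Dcan = 1.
Proof.
rewrite det_trig; last first.
  apply/is_trig_mxP => i j Hij; rewrite mxE /Dcf.
  case: ifP => H1; case: ifP => H2 //.
    by rewrite (norm_neg Nas) //; lia.
  by rewrite (norm_neg Na) //; lia.
rewrite big1 // => i _; rewrite mxE /Dcf subrr.
by case H: (i < q + s)%N; [case: Nas => -> | case: Na => ->].
Qed.

Lemma det_1Nm : \det (1%:M + Nm) = 1.
Proof.
rewrite det_trig; last first.
  apply/is_trig_mxP => i j Hij; rewrite !mxE.
  rewrite (_ : (i == j) = false); last by apply/negbTE; rewrite neq_ltn Hij.
  case H: (hx j && (i == exn j :> nat)); last by rewrite addr0.
  by exfalso; move: H; rewrite /hx /exn /nn; case: ifP; lia.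
rewrite big1 // => i _; rewrite !mxE eqxx.
case H: (hx i && (i == exn i :> nat)); last by rewrite addr0.
by exfalso; move: H; rewrite /hx /exn /nn; case: ifP; lia.
Qed.

Lemma detX : \det X = (-1) ^+ tau.
Proof.
rewrite /X !det_mulmx det_Dcan det_1Nm !det_perm odd_permV mulr1.
by rewrite mulr1 mulrAC -expr2 sqrr_sign mul1r.
Qed.

Lemma hy_exinv k : (k < NN)%N -> hy k -> (exinv k < NN)%N.
Proof. rewrite /hy /exinv /NN /nn /mm; case: ifP; lia. Qed.

Lemma Xe (i j : 'I_NN) :
  X i j = Dcf (lab i) (rhon j) + (if hx j then Dcf (lab i) (rhon (exn j)) else 0).
Proof.
set M := perm_mx rho *m perm_mx tau *m Dcan *m perm_mx rho^-1.
have ME : forall k : 'I_NN, M i k = Dcf (lab i) (rhon k).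
  move=> k; rewrite /M -perm_mxM -row_permE -[rho in perm_mx rho^-1]invgK -col_permE.
  by rewrite !mxE permM tauE rhoE invgK rhoE.
rewrite /X -/M mulmxDr mulmx1 mxE ME; congr (_ + _).
rewrite mxE; under eq_bigr do rewrite ME mxE.
case Hj: (hx j).
  have [_ He] := andP (hx_exn Hj).
  by rewrite -(sum_pick (fun k => Dcf (lab i) (rhon k)) He).
by rewrite big1 // => k _; rewrite mulr0.
Qed.

Lemma Ye (k i : 'I_NN) :
  Y k i = Dif (rhon k) (lab i) - (if hy k then Dif (rhon (exinv k)) (lab i) else 0).
Proof.
set V := perm_mx rho *m Dinv *m perm_mx tau^-1 *m perm_mx rho^-1.
have VE : forall l : 'I_NN, V l i = Dif (rhon l) (lab i).
  move=> l; rewrite /V -mulmxA -perm_mxM -invMg -col_permE -row_permE.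
  by rewrite !mxE permM tauE !rhoE.
have -> : Y = (1%:M - Nm) *m V by rewrite /Y /V !mulmxA.
rewrite mulmxBl mul1mx mxE VE mxE; congr (_ - _).
rewrite mxE; under eq_bigr do rewrite VE mxE hxy ?ltn_ord //.
case Hk: (hy k).
  have He := hy_exinv (ltn_ord k) Hk.
  by rewrite -(sum_pick' (fun l => Dif (rhon l) (lab i)) He).
by rewrite big1 // => l _; rewrite mul0r.
Qed.

Hypothesis Pnu : sorted geq nu.
Hypothesis Pmu : sorted geq mu.

Lemma nth_le_max (la : seq nat) k : (nth 0 la k <= foldr maxn 0 la)%N.
Proof.
case: (ltnP k (size la)) => H; last by rewrite nth_default.
by apply: le_foldr_max; apply: mem_nth.
Qed.

Lemma nth_nu k : (nth 0 nu k <= s)%N.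
Proof. by rewrite -Hs size_conj nth_le_max. Qed.
Lemma nth_mu k : (nth 0 mu k <= r)%N.
Proof. by rewrite -Hr size_conj nth_le_max. Qed.
Lemma cnt_nu j : (cnt nu j <= q)%N.
Proof. by rewrite -Hq cnt_le. Qed.
Lemma cnt_mu j : (cnt mu j <= p)%N.
Proof. by rewrite -Hp cnt_le. Qed.

Lemma lab_nu i : (i < q)%N -> lab i = (nth 0 nu (q - 1 - i) + i)%N.
Proof.
move=> Hi; rewrite /lab /rhon Hi /tauf (_ : (i < q + s)%N) ?ltn_addr //.
by rewrite /sh Hi.
Qed.

Lemma lab_mu i : (q <= i < nn)%N -> lab i = (q + s + (nth 0 mu (i - q) + (p + q - 1 - i)))%N.
Proof.
move=> /andP[H1 H2]; rewrite /lab /rhon ltnNge H1 /= H2 /tauf.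
rewrite (_ : (q + s + (p + q - 1 - i) < q + s)%N = false); last by apply/negbTE; lia.
rewrite addKn /sh (_ : (p + q - 1 - i < p)%N); last by move: H2; rewrite /nn; lia.
by rewrite (_ : (p - 1 - (p + q - 1 - i) = i - q)%N) //; move: H2; rewrite /nn; lia.
Qed.

Lemma lab_nuc u : (u < s)%N -> lab (nn + u) = (q + s - 1 - u - cnt nu (s - 1 - u))%N.
Proof.
move=> Hu; rewrite /lab /rhon (_ : (nn + u < q)%N = false); last by apply/negbTE; rewrite /nn; lia.
rewrite (_ : (nn + u < nn)%N = false); last by apply/negbTE; lia.
rewrite (_ : (nn + u < nn + s)%N); last by lia.
rewrite /tauf (_ : (q + s - 1 - (nn + u - nn) < q + s)%N); last by lia.
rewrite /sh (_ : (q + s - 1 - (nn + u - nn) < q)%N = false); last by apply/negbTE; lia.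
by rewrite addKn (_ : (q + s - 1 - u - q = s - 1 - u)%N) //; lia.
Qed.

Lemma lab_muc u : (u < r)%N -> lab (nn + s + u) = (q + s + (p + u - cnt mu u))%N.
Proof.
move=> Hu; rewrite /lab /rhon (_ : (nn + s + u < q)%N = false); last by apply/negbTE; rewrite /nn; lia.
rewrite (_ : (nn + s + u < nn)%N = false); last by apply/negbTE; lia.
rewrite (_ : (nn + s + u < nn + s)%N = false); last by apply/negbTE; lia.
have -> : (p + (nn + s + u - nn) - s = p + u)%N by lia.
rewrite /tauf (_ : (q + s + (p + u) < q + s)%N = false); last by apply/negbTE; lia.
rewrite addKn /sh (_ : (p + u < p)%N = false); last by apply/negbTE; lia.
by rewrite addKn.
Qed.

Ltac simp := rewrite ?(addr0, add0r, subr0, sub0r, mul1r, mulr1, mulN1r, mulrN1, opprK, mulr0, mul0r, oppr0).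
Ltac fin := simp; first [ by exfalso; lia | done
  | by congr (- bstar _); lia | by congr (- b _); lia
  | by rewrite (norm_neg Nbs); [simp | lia] | by rewrite (norm_neg Nb); [simp | lia]
  | by congr (astar _); lia | by congr (a _); lia | by congr (bstar _); lia | by congr (b _); lia
  | by rewrite (norm_neg Nas) //; lia | by rewrite (norm_neg Na) //; lia
  | by rewrite (norm_neg Nbs) //; lia | by rewrite (norm_neg Nb) //; lia ].



Lemma rhon_nuc t : (t < s)%N -> rhon (nn + t) = (q + s - 1 - t)%N.
Proof.
move=> Ht; rewrite /rhon (_ : (nn + t < q)%N = false); last by apply/negbTE; rewrite /nn; lia.
rewrite (_ : (nn + t < nn)%N = false); last by apply/negbTE; lia.
by rewrite (_ : (nn + t < nn + s)%N) ?addKn //; lia.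
Qed.
Lemma rhon_muc t : rhon (nn + s + t) = (q + s + (p + t))%N.
Proof.
rewrite /rhon (_ : (nn + s + t < q)%N = false); last by apply/negbTE; rewrite /nn; lia.
rewrite (_ : (nn + s + t < nn)%N = false); last by apply/negbTE; lia.
rewrite (_ : (nn + s + t < nn + s)%N = false); last by apply/negbTE; lia.
by congr (_ + _)%N; lia.
Qed.
Lemma hy_nuc t : (t < s)%N -> hy (nn + t) = (q + s - 1 - t < nn)%N.
Proof. by move=> Ht; rewrite /hy; apply/idP/idP; lia. Qed.
Lemma exinv_nuc t : (t < s)%N -> exinv (nn + t) = (q + s - 1 - t)%N.
Proof. by move=> Ht; rewrite /exinv (_ : (nn + t < nn + s)%N) ?addKn //; lia. Qed.
Lemma hy_muc t : hy (nn + s + t) = (t < q)%N.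
Proof. by rewrite /hy; apply/idP/idP; lia. Qed.
Lemma exinv_muc t : exinv (nn + s + t) = (q - 1 - t)%N.
Proof.
rewrite /exinv (_ : (nn + s + t < nn + s)%N = false); last by apply/negbTE; lia.
by congr (_ - _)%N; lia.
Qed.
Lemma rhon_lowq x : (x < q)%N -> rhon x = x.
Proof. by move=> H; rewrite /rhon H. Qed.
Lemma rhon_mid x : (q <= x < nn)%N -> rhon x = (q + s + (p + q - 1 - x))%N.
Proof. by case/andP=> H1 H2; rewrite /rhon ltnNge H1 /= H2. Qed.

Lemma ulXe (i j : 'I_NN) : (i < nn)%N -> (j < nn)%N ->
  X i j = if (i < q)%N then astar ((nth 0%N nu (q - 1 - i))%:Z + i%:Z - j%:Z)
          else a ((nth 0%N mu (i - q))%:Z - q%:Z - (i - q)%:Z + j%:Z).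
Proof.
move=> Hi Hj; have Enn : nn = (q + p)%N by [].
have Elab : lab i = if (i < q)%N then (nth 0%N nu (q - 1 - i) + i)%N
                    else (q + s + (nth 0 mu (i - q) + (p + q - 1 - i)))%N.
  by case: ifP => H; [rewrite lab_nu | rewrite lab_mu // Hi leqNgt H].
have Bn := nth_nu (q - 1 - i); have Bm := nth_mu (i - q).
rewrite Xe Elab.
case Hjq: (j < q)%N.
  have -> : hx j = (q - 1 - j < r)%N by rewrite /hx Hjq; apply/idP/idP; lia.
  rewrite rhon_lowq // /exn Hjq rhon_muc.
  by case Hiq: (i < q)%N; rewrite /Dcf; dif; fin.
rewrite rhon_mid; last by rewrite Hj leqNgt Hjq.
have -> : hx j = (j < q + s)%N by rewrite /hx Hjq; apply/idP/idP; lia.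
rewrite /exn Hjq.
case Hjs: (j < q + s)%N; last by case Hiq: (i < q)%N; rewrite /Dcf; dif; fin.
rewrite rhon_nuc; last by lia.
by case Hiq: (i < q)%N; rewrite /Dcf; dif; fin.
Qed.

Lemma drYe (k i : 'I_NN) t u : val k = (nn + t)%N -> val i = (nn + u)%N -> (t < mm)%N -> (u < mm)%N ->
  Y k i = (if (t < s)%N then 1 else -1) * (if (u < s)%N then 1 else -1) *
    (if (u < s)%N then bstar ((cnt nu (s - 1 - u))%:Z + u%:Z - t%:Z)
     else b ((cnt mu (u - s))%:Z - s%:Z - (u - s)%:Z + t%:Z)).
Proof.
move=> Hk Hi Ht Hu; rewrite Ye Hk Hi; move: Ht Hu; rewrite /mm => Ht Hu.
have Enn : nn = (q + p)%N by [].
case Hus: (u < s)%N.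
  rewrite lab_nuc //; have Bc := cnt_nu (s - 1 - u).
  case Hts: (t < s)%N.
    rewrite rhon_nuc // hy_nuc // exinv_nuc //.
    case: ifP => Hh; last by move: Hh; rewrite /nn => Hh; rewrite /Dif; dif; fin.
    rewrite rhon_mid; last by move: Hh; rewrite /nn; lia.
    rewrite /Dif; dif; fin.
  rewrite (_ : (nn + t = nn + s + (t - s))%N); last by move: Hts; lia.
  rewrite rhon_muc hy_muc exinv_muc.
  case: ifP => Hh; last by move: Hh; rewrite /nn => Hh; rewrite /Dif; dif; fin.
  rewrite rhon_lowq; last by lia.
  rewrite /Dif; dif; fin.
rewrite (_ : (nn + u = nn + s + (u - s))%N); last by move: Hus; lia.
rewrite lab_muc; last by move: Hus Hu; lia.
have Bc := cnt_mu (u - s).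
case Hts: (t < s)%N.
  rewrite rhon_nuc // hy_nuc // exinv_nuc //.
  case: ifP => Hh; last by move: Hh; rewrite /nn => Hh; rewrite /Dif; dif; fin.
  rewrite rhon_mid; last by move: Hh; rewrite /nn; lia.
  rewrite /Dif; dif; fin.
rewrite (_ : (nn + t = nn + s + (t - s))%N); last by move: Hts; lia.
rewrite rhon_muc hy_muc exinv_muc.
case: ifP => Hh; last by move: Hh; rewrite /nn => Hh; rewrite /Dif; dif; fin.
rewrite rhon_lowq; last by lia.
rewrite /Dif; dif; fin.
Qed.

Lemma jacobi_block (K : comPzRingType) n m (X Y : 'M[K]_(n+m)) :
  X *m Y = 1%:M -> \det (ulsubmx X) = \det X * \det (drsubmx Y).
Proof.
move=> XY.
set Z := block_mx 1%:M (ursubmx Y) 0 (drsubmx Y).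
have eq1 : X *m Y = block_mx 1%:M 0 0 1%:M by rewrite XY scalar_mx_block.
rewrite -[X in X *m Y]submxK -[Y in _ *m Y]submxK mulmx_block in eq1.
case/eq_block_mx: eq1 => _ e2 _ e4.
have : X *m Z = block_mx (ulsubmx X) 0 (dlsubmx X) 1%:M.
  rewrite -[X in X *m Z]submxK /Z mulmx_block !mulmx1 !mulmx0 !addr0 e2 e4.
  done.
move/(congr1 determinant); rewrite det_mulmx det_lblock /Z det_ublock !det1 mulr1 mul1r.
by move=> ->.
Qed.

Definition Amx : 'M[R]_nn := \matrix_(i, j)
  (if (i < q)%N then astar ((nth 0%N nu (q - 1 - i))%:Z + i%:Z - j%:Z)
   else a ((nth 0%N mu (i - q))%:Z - q%:Z - (i - q)%:Z + j%:Z)).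
Definition Bmx : 'M[R]_mm := \matrix_(u, t)
  (if (u < s)%N then bstar ((cnt nu (s - 1 - u))%:Z + u%:Z - t%:Z)
   else b ((cnt mu (u - s))%:Z - s%:Z - (u - s)%:Z + t%:Z)).

Lemma final_sec : \det Amx = (-1) ^+ tau * \det Bmx.
Proof.
have := @jacobi_block R nn mm X Y XY.
have -> : ulsubmx X = Amx.
  have E : forall (M : 'M[R]_NN) i j, ulsubmx M i j = M (lshift mm i) (lshift mm j).
    by move=> M i' j'; rewrite !mxE.
  by apply/matrixP => i j; rewrite E ulXe //= ?ltn_ord // mxE.
pose sg := \row_(t < mm) (if (t < s)%N then 1 else -1 : R).
have -> : drsubmx Y = diag_mx sg *m Bmx^T *m diag_mx sg.
  have E : forall (M : 'M[R]_NN) i j, drsubmx M i j = M (rshift nn i) (rshift nn j).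
    by move=> M i' j'; rewrite !mxE.
  apply/matrixP => t u; rewrite mul_mx_diag mul_diag_mx [LHS]E.
  rewrite (drYe (t := t) (u := u)) ?ltn_ord // !mxE.
  by rewrite mulrAC.
rewrite detX !det_mulmx det_tr => ->; congr (_ * _).
rewrite mulrC mulrA -det_mulmx -[X in _ = X]mul1r; congr (_ * _).
rewrite det_mulmx det_diag -big_split /= big1 // => i _; rewrite mxE.
by case: ifP; rewrite ?mulr1 ?mulrNN ?mulr1.
Qed.

End Main.

Local Open Scope ring_scope.

Theorem mainTheorem19 (R : comPzRingType) (a astar b bstar : int -> R)
  (nu mu : seq nat) :
  normalized_seq a -> normalized_seq astar ->
  normalized_seq b -> normalized_seq bstar ->
  series_inverse a b -> series_inverse astar bstar ->
  is_partition nu -> is_partition mu ->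
  \det (jt_matrix astar a nu mu) =
  (-1) ^+ (sumn nu + sumn mu) *
  \det (jt_matrix bstar b (conj_part nu) (conj_part mu)).
Proof.
move=> Na Nas Nb Nbs Sab Sas /andP[Pnu _] /andP[Pmu _].
have [sv [Hsv Osv]] := @sh_perm (size nu) (size (conj_part nu)) nu Pnu (leqnn _)
  (eq_ind_r (fun w => all (fun x => x <= w)%N nu) (all_le_max nu) (size_conj nu)).
have [sm [Hsm Osm]] := @sh_perm (size mu) (size (conj_part mu)) mu Pmu (leqnn _)
  (eq_ind_r (fun w => all (fun x => x <= w)%N mu) (all_le_max mu) (size_conj mu)).
have := final_sec (erefl (size nu)) (erefl (size mu)) (erefl (size (conj_part nu)))
  (erefl (size (conj_part mu))) Hsv Hsm Na Nas Nb Nbs Sab Sas Pnu Pmu.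
have -> : Amx a astar nu mu (size nu) (size mu) = jt_matrix astar a nu mu.
  by apply/matrixP => i j; rewrite !mxE.
have -> : Bmx b bstar nu mu (size (conj_part nu)) (size (conj_part mu)) =
          jt_matrix bstar b (conj_part nu) (conj_part mu).
  by apply/matrixP => i j; rewrite !mxE !nth_conj.
move=> ->; congr (_ * _).
rewrite /tau -signr_odd odd_cast_perm signr_odd sign_psum Osv Osm !signr_odd.
by rewrite exprD.
Qed.
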